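(* Let $(\lambda_n)_{n\ge 1}$ be a sequence of positive real numbers and put $\Lambda_n=\sum_{i=1}^n\lambda_i$. Suppose that \[ M=\sup_{n\ge 1}\sum_{k=1}^{n}\frac{\lambda_k}{\Lambda_n}\Big(\frac{\Lambda_{k+1}}{\lambda_{k+1}}-\frac{\Lambda_k}{\lambda_k}\Big)<+\infty . \] Then for every sequence $(a_n)_{n\ge1}$ of non-negative real numbers with $\sum_{n=1}^\infty a_n<\infty$, \[ \sum_{n=1}^{\infty}\prod_{k=1}^{n}a_k^{\lambda_k/\Lambda_n}\le e^{M}\sum_{n=1}^{\infty}a_n . \] *)

(* Defs.v *)
From HB Require Import structures.
From mathcomp Require Import all_boot all_order all_algebra.
From mathcomp Require Import all_classical all_reals all_analysis.
Set Implicit Arguments. Unset Strict Implicit. Unset Printing Implicit Defensive.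
Import Order.TTheory GRing.Theory Num.Theory.
Local Open Scope ring_scope.

(* Sequences are indexed by nat; only indices n >= 1 are used. *)

Definition Lam (R : realType) (lam : nat -> R) (n : nat) : R :=
  \sum_(1 <= i < n.+1) lam i.

Definition Sn (R : realType) (lam : nat -> R) (n : nat) : R :=
  \sum_(1 <= k < n.+1)
     (lam k / Lam lam n) * (Lam lam k.+1 / lam k.+1 - Lam lam k / lam k).

(* prod_{k=1}^n a_k^{lambda_k / Lambda_n}, with powR (0 `^ x = 0 for x <> 0) *)
Definition geomterm (R : realType) (lam a : nat -> R) (n : nat) : R :=
  \prod_(1 <= k < n.+1) (a k `^ (lam k / Lam lam n)).

(* Main.v *)
Require Import Defs.
From HB Require Import structures.
From mathcomp Require Import all_boot all_order all_algebra.
From mathcomp Require Import all_classical all_reals all_analysis.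
From mathcomp Require Import ring lra.
Import Order.TTheory GRing.Theory Num.Theory.
Local Open Scope classical_set_scope.
Local Open Scope ring_scope.

Section S.
Variable R : realType.

Lemma ln_diff (x y : R) : 0 < x -> 0 < y -> y * (ln x - ln y) <= x - y.
Proof.
move=> x0 y0.
have h : ln x - ln y = ln (1 + (x / y - 1)).
  by rewrite addrCA subrr addr0 ln_div.
have : ln (1 + (x / y - 1)) <= x / y - 1.
  apply: le_ln1Dx; rewrite ltrBrDl addrN divr_gt0//.
rewrite -h => H.
have := ler_wpM2l (ltW y0) H.
move=> /le_trans; apply.
by rewrite mulrBr mulr1 mulrCA divff ?mulr1 ?gt_eqF.
Qed.

Lemma amgm_term (A x w : R) : 0 < A -> 0 <= x -> 0 <= w ->
  x `^ w <= expR (w * ln A + (x / A - 1) * w).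
Proof.
move=> A0 x0 w0.
have -> : w * ln A + (x / A - 1) * w = (ln A + (x / A - 1)) * w by ring.
rewrite expRM.
apply: ge0_ler_powR => //; rewrite ?nnegrE ?expR_ge0 //.
rewrite expRD lnK ?posrE //.
have := expR_ge1Dx (x / A - 1); rewrite addrC subrK => H.
rewrite -(ler_pM2l A0) in H.
by rewrite mulrCA divff ?mulr1 in H; [exact: H| rewrite gt_eqF].
Qed.

Lemma amgm n (x w : nat -> R) :
  (forall k, (1 <= k < n.+1)%N -> 0 <= x k /\ 0 < w k) ->
  \sum_(1 <= k < n.+1) w k = 1 ->
  \prod_(1 <= k < n.+1) x k `^ w k <= \sum_(1 <= k < n.+1) w k * x k.
Proof.
move=> hxw hw.
have n1 : (1 < n.+1)%N.
  by case: n hxw hw => [|n] // _; rewrite big_geq// => /esym/eqP; rewrite oner_eq0.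
set A := \sum_(1 <= k < n.+1) w k * x k.
have A0 : 0 <= A.
  rewrite /A big_nat_cond; apply: sumr_ge0 => k /andP[kr _].
  by have [h1 h2] := hxw k kr; rewrite mulr_ge0// ltW.
move: A0; rewrite le_eqVlt => /orP[/eqP A0|A0].
  have [h1 h2] := hxw 1%N n1.
  have : w 1%N * x 1%N + \sum_(2 <= k < n.+1) w k * x k == 0.
    by rewrite -big_ltn// -/A -A0.
  rewrite paddr_eq0.
  - move=> /andP[/eqP + _] ; move=> /eqP; rewrite mulf_eq0 gt_eqF//= => /eqP x10.
    by rewrite big_ltn// x10 powR0 ?gt_eqF// mul0r -A0.
  - by rewrite mulr_ge0// ltW.
  - rewrite big_nat_cond; apply: sumr_ge0 => k /andP[kr _].
    have kr' : (1 <= k < n.+1)%N by case/andP: kr => /ltnW -> ->.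
    by have [h3 h4] := hxw k kr'; rewrite mulr_ge0// ltW.
apply: (@le_trans _ _ (\prod_(1 <= k < n.+1) expR (w k * ln A + (x k / A - 1) * w k))).
  rewrite big_nat_cond [in X in _ <= X]big_nat_cond.
  apply: ler_prod => k /andP[kr _]; have [h1 h2] := hxw k kr.
  by rewrite powR_ge0 amgm_term// ltW.
rewrite -expR_sum.
rewrite (eq_bigr (fun k => (ln A - 1) * w k + (w k * x k) * A^-1)); last first.
  by move=> k _; ring.
rewrite big_split /= -!mulr_sumr -mulr_suml hw -/A divff ?gt_eqF//.
by rewrite mulr1 subrK lnK// posrE.
Qed.
End S.

Section Main.
Variables (R : realType) (lam : nat -> R).
Hypothesis lam_pos : forall n, (1 <= n)%N -> 0 < lam n.
Local Notation L := (Lam lam).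
Definition rr k := L k / lam k.

Lemma Lam0 : L 0 = 0.
Proof. by rewrite /Lam big_geq. Qed.

Lemma LamS n : L n.+1 = L n + lam n.+1.
Proof. by rewrite /Lam big_nat_recr. Qed.

Lemma Lam_ge0 n : 0 <= L n.
Proof.
rewrite /Lam big_nat_cond; apply: sumr_ge0 => i /andP[/andP[i1 _] _].
exact/ltW/lam_pos.
Qed.

Lemma Lam_gt0 n : (1 <= n)%N -> 0 < L n.
Proof.
case: n => // n _; rewrite LamS.
have := Lam_ge0 n; have := @lam_pos n.+1 (ltn0Sn n); lra.
Qed.

Lemma rr_gt0 k : (1 <= k)%N -> 0 < rr k.
Proof. by move=> k1; rewrite divr_gt0 ?Lam_gt0 ?lam_pos. Qed.

Lemma DE n : L n * ln (rr n.+1) - \sum_(1 <= k < n.+1) lam k * ln (rr k)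
  <= \sum_(1 <= k < n.+1) lam k * (rr k.+1 - rr k).
Proof.
elim: n => [|n IH]; first by rewrite Lam0 !big_geq// mul0r subrr.
have key : L n.+1 * (ln (rr n.+2) - ln (rr n.+1)) <= lam n.+1 * (rr n.+2 - rr n.+1).
  have -> : L n.+1 = lam n.+1 * rr n.+1.
    by rewrite /rr mulrCA divff ?mulr1 // gt_eqF // lam_pos.
  rewrite -mulrA ler_wpM2l //.
    exact: ltW (lam_pos n.+1 (ltn0Sn n)).
  by apply: ln_diff; apply: rr_gt0.
rewrite (LamS n) in key.
rewrite (LamS n) !(big_nat_recr n.+1 1) //=.
lra.
Qed.

Lemma Gbound n M : (1 <= n)%N -> Sn lam n <= M ->
  ln (rr n.+1) - M <= \sum_(1 <= k < n.+1) (lam k / L n) * ln (rr k).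
Proof.
move=> n1 SM.
have Ln := Lam_gt0 n n1.
have eS : Sn lam n = (\sum_(1 <= k < n.+1) lam k * (rr k.+1 - rr k)) / L n.
  rewrite /Sn mulr_suml; apply: eq_bigr => k _; rewrite /rr; ring.
have eT : \sum_(1 <= k < n.+1) (lam k / L n) * ln (rr k)
    = (\sum_(1 <= k < n.+1) lam k * ln (rr k)) / L n.
  rewrite mulr_suml; apply: eq_bigr => k _; ring.
rewrite eT.
have := DE n.
set A := \sum_(1 <= k < n.+1) lam k * ln (rr k).
set B := \sum_(1 <= k < n.+1) lam k * (rr k.+1 - rr k).
move=> h.
have h2 : (L n * ln (rr n.+1) - A) / L n <= B / L n.
  by rewrite ler_wpM2r // invr_ge0 ltW.
have e3 : (L n * ln (rr n.+1) - A) / L n = ln (rr n.+1) - A / L n.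
  by field; rewrite gt_eqF.
rewrite e3 -eS in h2.
lra.
Qed.

Lemma geom_bound n M (a : nat -> R) : (1 <= n)%N -> Sn lam n <= M ->
  (forall k, (1 <= k)%N -> 0 <= a k) ->
  geomterm lam a n <= expR M * (lam n.+1 / (L n * L n.+1))
                       * \sum_(1 <= k < n.+1) L k * a k.
Proof.
move=> n1 SM a0.
have Ln := Lam_gt0 n n1.
have Ln1 := Lam_gt0 n.+1 (ltn0Sn n).
have ln1 := lam_pos n.+1 (ltn0Sn n).
set B := \sum_(1 <= k < n.+1) L k * a k.
have B0 : 0 <= B.
  rewrite /B big_nat_cond; apply: sumr_ge0 => k /andP[/andP[k1 _] _].
  by rewrite mulr_ge0 ?a0 ?Lam_ge0.
set G := \prod_(1 <= k < n.+1) rr k `^ (lam k / L n).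
have eG : G = expR (\sum_(1 <= k < n.+1) (lam k / L n) * ln (rr k)).
  rewrite expR_sum /G big_nat_cond [in RHS]big_nat_cond.
  apply: eq_bigr => k /andP[/andP[k1 _] _].
  by rewrite /powR gt_eqF ?rr_gt0.
have G0 : 0 < G by rewrite eG expR_gt0.
have hG : rr n.+1 / expR M <= G.
  rewrite eG -[rr n.+1]lnK ?posrE ?rr_gt0 // -expRN -expRD ler_expR.
  exact: Gbound.
have hprod : geomterm lam a n * G
    = \prod_(1 <= k < n.+1) (a k * rr k) `^ (lam k / L n).
  rewrite /geomterm /G -big_split big_nat_cond [in RHS]big_nat_cond.
  apply: eq_bigr => k /andP[/andP[k1 _] _].
  by rewrite powRM ?a0 // ltW ?rr_gt0.
have hw : \sum_(1 <= k < n.+1) lam k / L n = 1.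
  by rewrite -mulr_suml divff // gt_eqF.
have ham := @amgm R n (fun k => a k * rr k) (fun k => lam k / L n).
have eam : \sum_(1 <= k < n.+1) lam k / L n * (a k * rr k) = B / L n.
  rewrite /B mulr_suml big_nat_cond [in RHS]big_nat_cond.
  apply: eq_bigr => k /andP[/andP[k1 _] _].
  have := lam_pos k k1; rewrite /rr => lk.
  by field; rewrite !gt_eqF.
have h1 : geomterm lam a n * G <= B / L n.
  rewrite hprod -eam; apply: (ham _ hw) => k /andP[k1 _].
  by rewrite mulr_ge0 ?a0 // ?ltW ?rr_gt0 // divr_gt0 ?lam_pos.
rewrite -ler_pdivlMr // in h1.
apply: (le_trans h1).
apply: (@le_trans _ _ (B / L n / (rr n.+1 / expR M))).
  apply: ler_wpM2l; first by rewrite divr_ge0 // ltW.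
  rewrite lef_pV2 // posrE // divr_gt0 ?expR_gt0 ?rr_gt0 //.
rewrite /rr; have := expR_gt0 M => eM.
rewrite le_eqVlt; apply/orP; left; apply/eqP.
by field; rewrite !gt_eqF.
Qed.

Lemma tele (a : nat -> R) N :
  \sum_(1 <= n < N.+1) (lam n.+1 / (L n * L n.+1)) * (\sum_(1 <= k < n.+1) L k * a k)
  + (\sum_(1 <= k < N.+1) L k * a k) / L N.+1 = \sum_(1 <= k < N.+1) a k.
Proof.
elim: N => [|N IH]; first by rewrite !big_geq // mul0r addr0.
rewrite (big_nat_recr N.+1 1) //= (big_nat_recr N.+1 1 (fun k => L k * a k)) //=.
rewrite (big_nat_recr N.+1 1 a) //= -IH.
have h1 := Lam_gt0 N.+1 (ltn0Sn N).
have h2 := lam_pos N.+2 (ltn0Sn N.+1).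
rewrite (LamS N.+1).
by field; rewrite !gt_eqF // ltr_wpDl // ltW.
Qed.

Lemma partial M (a : nat -> R) N :
  (forall n, (1 <= n)%N -> Sn lam n <= M) ->
  (forall k, (1 <= k)%N -> 0 <= a k) ->
  \sum_(1 <= n < N.+1) geomterm lam a n <= expR M * \sum_(1 <= k < N.+1) a k.
Proof.
move=> SM a0.
apply: (@le_trans _ _ (\sum_(1 <= n < N.+1)
   expR M * ((lam n.+1 / (L n * L n.+1)) * (\sum_(1 <= k < n.+1) L k * a k)))).
  rewrite big_nat_cond [in X in _ <= X]big_nat_cond.
  apply: ler_sum => n /andP[/andP[n1 _] _].
  by rewrite mulrA; apply: geom_bound => //; apply: SM.
rewrite -mulr_sumr ler_wpM2l ?expR_ge0 // -tele lerDl.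
have h1 := Lam_gt0 N.+1 (ltn0Sn N).
apply: divr_ge0; last exact: ltW.
rewrite big_nat_cond; apply: sumr_ge0 => k /andP[/andP[k1 _] _].
by rewrite mulr_ge0 ?a0 ?Lam_ge0.
Qed.
End Main.

Theorem corollary2p1 (R : realType) (lam : nat -> R) (M : R)
  (lam_pos : forall n, (1 <= n)%N -> 0 < lam n)
  (S_bnd : has_ubound [set Sn lam n | n in [set n : nat | (1 <= n)%N]])
  (M_def : M = sup [set Sn lam n | n in [set n : nat | (1 <= n)%N]])
  (a : nat -> R)
  (a_nneg : forall n, (1 <= n)%N -> 0 <= a n)
  (a_sum : (\sum_(1 <= n <oo) (a n)%:E < +oo)%E) :
  (\sum_(1 <= n <oo) (geomterm lam a n)%:E
     <= (expR M)%:E * \sum_(1 <= n <oo) (a n)%:E)%E.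
Proof.
have SM : forall n, (1 <= n)%N -> Sn lam n <= M.
  by move=> n n1; rewrite M_def; apply: (ub_le_sup S_bnd); exists n.
have g0 : forall n, (1 <= n)%N -> xpredT n -> (0 <= (geomterm lam a n)%:E)%E.
  move=> n _ _; rewrite lee_fin /geomterm; apply: prodr_ge0 => k _.
  exact: powR_ge0.
move/ereal_nondecreasing_series/ereal_nondecreasing_cvgn/cvg_lim : g0 => -> //.
apply: ub_ereal_sup => _ [k _ <-] /=.
rewrite sumEFin.
apply: (@le_trans _ _ ((expR M * \sum_(1 <= n < k) a n)%:E)).
  rewrite lee_fin; case: k => [|N]; first by rewrite !big_geq // mulr0.
  exact: partial.
rewrite EFinM -sumEFin; apply: lee_wpmul2l; first by rewrite lee_fin expR_ge0.
apply: (nneseries_lim_ge (P := xpredT)) => n n1 _.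
by rewrite lee_fin a_nneg.
Qed.
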